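(* Let $T:X\to X$ be a continuous map on a Hausdorff space and $\mathcal{F}$ a Furstenberg family. If $x$ is an $\mathcal{F}$-recurrent point of $T$, then $\mathcal{N}_{pr}(\mathcal{C}_T(x))=\mathcal{N}_{pr}(\{x\})$, and $\mathcal{C}_T(x)^N\subset\mathcal{F}\mathrm{Rec}(T_{(N)})$ for every $N\in\mathbb{N}$. If moreover $X$ is a topological vector space and $T$ is linear, then $\mathcal{C}_T(x)$ is a vector subspace of $X$ invariant under every $S\in\mathcal{C}_T$.
   Context: A Furstenberg family is a collection $\mathcal{F}$ of infinite subsets of $\mathbb{N}_0$, closed under supersets, with $A\cap[n,\infty)\in\mathcal{F}$ for all $A\in\mathcal{F}$, $n\in\mathbb{N}$. $N_T(x,U)=\{n\in\mathbb{N}_0:T^nx\in U\}$; $x$ is $\mathcal{F}$-recurrent if $N_T(x,U)\in\mathcal{F}$ for every neighbourhood $U$ of $x$; $\mathcal{F}\mathrm{Rec}(T)$ is the set of $\mathcal{F}$-recurrent points. $T_{(N)}(x_1,\dots,x_N)=(Tx_1,\dots,Tx_N)$ on $X^N$. The (non-linear) commutant is $\mathcal{C}_T=\{S:X\to X \text{ continuous}: S\circ T=T\circ S\}$, and $\mathcal{C}_T(x)=\{Sx:S\in\mathcal{C}_T\}$. For $Y\subset X$, $\mathcal{N}_{pr}(Y)=\{A\subset\mathbb{N}_0: N_T(y,U)\subset A \text{ for some } y\in Y \text{ and some neighbourhood } U \text{ of } y\}$. *)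

(* Defs.v *)
From HB Require Import structures.
From mathcomp Require Import all_boot all_order all_algebra.
From mathcomp Require Import all_classical all_reals all_analysis.
Set Implicit Arguments. Unset Strict Implicit. Unset Printing Implicit Defensive.
Import Order.TTheory GRing.Theory Num.Theory.
Local Open Scope classical_set_scope.
Local Open Scope ring_scope.

Definition furstenberg_family (F : set (set nat)) : Prop :=
  [/\ (forall A, F A -> infinite_set A),
      (forall A B, F A -> A `<=` B -> F B) &
      (forall A (n : nat), F A -> (0 < n)%N -> F (A `&` [set k | (n <= k)%N]))].

Definition N_T {X : Type} (T : X -> X) (x : X) (U : set X) : set nat :=
  [set n | U (iter n T x)].

Definition F_recurrent {X : topologicalType} (T : X -> X) (F : set (set nat))
  (x : X) : Prop :=
  forall U, nbhs x U -> F (N_T T x U).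

Definition FRec {X : topologicalType} (T : X -> X) (F : set (set nat)) : set X :=
  [set x | F_recurrent T F x].

Definition T_N {X : topologicalType} (N : nat) (T : X -> X) :
  {ptws 'I_N -> X} -> {ptws 'I_N -> X} :=
  fun v i => T (v i).

Definition commutant {X : topologicalType} (T : X -> X) : set (X -> X) :=
  [set S | continuous S /\ S \o T = T \o S].

Definition commutant_orbit {X : topologicalType} (T : X -> X) (x : X) : set X :=
  [set S x | S in commutant T].

Definition set_pow {X : Type} (N : nat) (Y : set X) : set ('I_N -> X) :=
  [set v | forall i, Y (v i)].

Definition N_pr {X : topologicalType} (T : X -> X) (Y : set X) : set (set nat) :=
  [set A | exists y, Y y /\ exists U, nbhs y U /\ N_T T y U `<=` A].

Definition vsubspace {K : numDomainType} {V : lmodType K} (A : set V) : Prop :=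
  A 0 /\ (forall (a : K) u v, A u -> A v -> A (a *: u + v)).
Arguments set_pow {X} N Y.
Arguments T_N {X} N T.

(* Main.v *)
Require Import Defs.
From HB Require Import structures.
From mathcomp Require Import all_boot all_order all_algebra.
From mathcomp Require Import all_classical all_reals all_analysis.
Import Order.TTheory GRing.Theory Num.Theory.
Local Open Scope classical_set_scope.
Local Open Scope ring_scope.

Lemma iter_comm {X : Type} (T S : X -> X) n z :
  S \o T = T \o S -> S (iter n T z) = iter n T (S z).
Proof.
move=> h; elim: n => //= n IH.
by rewrite -IH; have := congr1 (fun f => f (iter n T z)) h.
Qed.

Lemma iter_TN {X : topologicalType} N (T : X -> X) n (v : {ptws 'I_N -> X}) :
  iter n (T_N N T) v = (fun i => iter n T (v i)).
Proof.
elim: n => //= n ->; by [].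
Qed.

Lemma join_cont {X : topologicalType} N (S : 'I_N -> X -> X) :
  (forall i, continuous (S i)) ->
  continuous ((fun z => (fun i => S i z)) : X -> {ptws 'I_N -> X}).
Proof.
move=> cS x; apply/cvg_sup.
move=> i; move: x; apply/(@continuousP _ (initial_topology (@^~ i))) => A [B oB E].
rewrite -E.
have -> : (fun z => (fun i => S i z)) @^-1` ((@^~ i) @^-1` B) = S i @^-1` B by [].
exact: (proj1 (continuousP (S i)) (cS i) B oB).
Qed.

Theorem mainTheorem14 :
  (forall (X : topologicalType) (T : X -> X) (F : set (set nat)) (x : X),
     hausdorff_space X -> continuous T -> furstenberg_family F ->
     F_recurrent T F x ->
     N_pr T (commutant_orbit T x) = N_pr T [set x] /\
     (forall N : nat, (0 < N)%N ->
        set_pow N (commutant_orbit T x) `<=` FRec (T_N N T) F)) /\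
  (forall (K : numFieldType) (X : topologicalLmodType K) (T : X -> X)
          (F : set (set nat)) (x : X),
     hausdorff_space X -> continuous T -> linear T -> furstenberg_family F ->
     F_recurrent T F x ->
     vsubspace (commutant_orbit T x) /\
     (forall S, commutant T S -> S @` commutant_orbit T x `<=` commutant_orbit T x)).
Proof.
split.
  move=> X T F x _ cT [_ Fup _] rx; split.
    apply/seteqP; split => A [y [Cy [U [hU hA]]]].
      case: Cy => S [cS cST] Sx; subst y.
      exists x; split => //; exists (S @^-1` U); split; first exact: cS.
      move=> n /= hn; apply: hA; rewrite /N_T /= -iter_comm //.
    exists y; split; first by exists id => //; split => // z; apply: cvg_id.
    by exists U.
  move=> N _ v hv.
  have [S hS] : exists S : 'I_N -> X -> X, forall i, commutant T (S i) /\ S i x = v i.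
    have [f hf] := @choice 'I_N (X -> X) (fun i S0 => commutant T S0 /\ S0 x = v i)
      (fun i => match hv i with ex_intro2 S0 cS0 e => ex_intro _ S0 (conj cS0 e) end).
    by exists f.
  pose phi := ((fun z => (fun i => S i z)) : X -> {ptws 'I_N -> X}).
  have cphi : continuous phi by apply: join_cont => i; by case: (hS i) => -[].
  have phix : phi x = v.
    by apply: functional_extensionality_dep => i; case: (hS i).
  move=> W hW; rewrite /F_recurrent.
  have hW' : nbhs x (phi @^-1` W) by apply: cphi; rewrite phix.
  apply: (Fup _ _ (rx _ hW')) => n /= hn.
  rewrite /N_T /= iter_TN -phix; move: hn; congr W.
  apply: functional_extensionality_dep => i /=.
  by case: (hS i) => -[_ h] e; rewrite /phi /= iter_comm.
move=> K X T F x _ cT lT _ _.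
have T0 : T 0 = 0.
  have := lT (-1) 0 0; rewrite scaleN1r !addr0 oppr0.
  by move=> h; rewrite scaleN1r addNr in h.
split; last first.
  move=> S [cS cST] _ [y [R [cR cRT] <-] <-].
  exists (S \o R) => //; split.
    by move=> z; apply: continuous_comp; [exact: cR|exact: cS].
  by rewrite -compA cRT compA cST.
split.
  exists (fun _ => 0) => //; split; first exact: cst_continuous.
  by apply: functional_extensionality_dep => z /=; rewrite T0.
move=> a u v [S1 [c1 h1] <-] [S2 [c2 h2] <-].
exists (fun z => a *: S1 z + S2 z) => //; split.
  move=> z.
  apply: (@continuous2_cvg X X X X (nbhs z) _ (fun z => a *: S1 z) S2 (fun u w => u + w)).
  - exact: (add_continuous (a *: S1 z, S2 z)).
  - apply: (@continuous2_cvg X K^o X X (nbhs z) _ (fun _ => a) S1 (fun (k : K^o) w => k *: w)).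
    + exact: (scale_continuous ((a : K^o), S1 z)).
    + exact: cvg_cst.
    + exact: c1.
  - exact: c2.
apply: functional_extensionality_dep => z /=; rewrite lT.
by have := congr1 (fun f => f z) h1; have := congr1 (fun f => f z) h2 => /= -> ->.
Qed.
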